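(* Let $l:\mathbb{R}^p\to\mathbb{R}$ be a convex and differentiable function, let $\lambda_1\ge\lambda_2\ge\dots\ge\lambda_p\ge 0$ be arbitrary, and let $$\hat b\in\operatorname{argmin}_{b\in\mathbb{R}^p}\Big\{l(b)+\sum_{i=1}^p\lambda_i|b|_{(i)}\Big\}.$$ Let $R=\#\{i:\hat b_i\neq 0\}$, $U(b)=-\nabla l(b)$, and for $a>0$ let $T(a)=U(\hat b)+a\hat b$. Then for any $a>0$ and any $r\in\{1,\dots,p\}$, $$R=r \iff T(a)\in H_r.$$
   Context: $|w|_{(1)}\ge\dots\ge|w|_{(p)}$ denote the ordered absolute values of the entries of $w\in\mathbb{R}^p$. For $r\in\{1,\dots,p\}$, $$H_r=\Big\{w\in\mathbb{R}^p:\ \forall_{j\le r}\ \sum_{i=j}^r\lambda_i<\sum_{i=j}^r|w|_{(i)}\ \text{ and }\ \forall_{j\ge r+1}\ \sum_{i=r+1}^j\lambda_i\ge\sum_{i=r+1}^j|w|_{(i)}\Big\}.$$ *)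

(* Defs.v *)
From HB Require Import structures.
From mathcomp Require Import all_boot all_order all_algebra.
From mathcomp Require Import all_classical all_reals all_analysis.
Set Implicit Arguments. Unset Strict Implicit. Unset Printing Implicit Defensive.
Import Order.TTheory GRing.Theory Num.Theory.
Import numFieldNormedType.Exports.
Local Open Scope ring_scope.

Section Defs.
Variable R : realType.
Variable p : nat.

(* |w|_(i), 1-based: i-th largest absolute value of the entries of w
   (i in 1..p); the value for i outside 1..p is irrelevant (it is never used). *)
Definition sorted_abs (w : 'rV[R]_p) : seq R :=
  sort (fun x y : R => y <= x) [seq `|w 0 j| | j <- enum 'I_p].
Definition oabs (w : 'rV[R]_p) (i : nat) : R := nth 0 (sorted_abs w) i.-1.

(* lambda_i, 1-based, for lam : 'rV_p *)
Definition lamn (lam : 'rV[R]_p) (i : nat) : R :=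
  nth 0 [seq lam 0 j | j <- enum 'I_p] i.-1.

Definition slope_pen (lam : 'rV[R]_p) (b : 'rV[R]_p) : R :=
  \sum_(1 <= i < p.+1) lamn lam i * oabs b i.

Definition convex_fun (l : 'rV[R]_p -> R) : Prop :=
  forall (x y : 'rV[R]_p) (t : R), 0 <= t <= 1 ->
    l (t *: x + (1 - t) *: y) <= t * l x + (1 - t) * l y.

Definition grad (l : 'rV[R]_p -> R) (b : 'rV[R]_p) : 'rV[R]_p :=
  \row_i ('d l b (delta_mx 0 i : 'rV[R]_p)).

Definition H (lam : 'rV[R]_p) (r : nat) (w : 'rV[R]_p) : Prop :=
  (forall j : nat, (1 <= j <= r)%N ->
     \sum_(j <= i < r.+1) lamn lam i < \sum_(j <= i < r.+1) oabs w i) /\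
  (forall j : nat, (r.+1 <= j <= p)%N ->
     \sum_(r.+1 <= i < j.+1) lamn lam i >= \sum_(r.+1 <= i < j.+1) oabs w i).

End Defs.

(* Main.v *)
Require Import Defs.
From HB Require Import structures.
From mathcomp Require Import all_boot all_order all_algebra.
From mathcomp Require Import all_classical all_reals all_analysis.
Import Order.TTheory GRing.Theory Num.Theory.
Import numFieldNormedType.Exports.
Local Open Scope ring_scope.
From mathcomp Require Import ring lra.

Module Helpers.
Set Implicit Arguments. Unset Strict Implicit. Unset Printing Implicit Defensive.
Local Open Scope ring_scope.


Section Sorting.
Variable R : realType.
Variable p : nat.
Implicit Types x y : 'rV[R]_p.

Definition pp (v : R) : R := Order.max v 0.
Definition S k x : R := \sum_(i < k) nth 0 (sorted_abs x) i.

Lemma size_s x : size (sorted_abs x) = p.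
Proof. by rewrite /sorted_abs size_sort size_map size_enum_ord. Qed.

Lemma perm_s x : perm_eq (sorted_abs x) [seq `|x 0 j| | j <- enum 'I_p].
Proof. by rewrite /sorted_abs perm_sort. Qed.

Lemma sum_s x (F : R -> R) :
  \sum_(i < p) F (nth 0 (sorted_abs x) i) = \sum_(j < p) F `|x 0 j|.
Proof.
rewrite -[RHS]big_enum /= -(big_map (fun j => `|x 0 j|) xpredT F).
rewrite -(perm_big _ (perm_s x)) (big_nth 0) size_s big_mkord //.
Qed.

Lemma s_sorted x i i' : (i <= i')%N -> (i' < p)%N ->
  nth 0 (sorted_abs x) i' <= nth 0 (sorted_abs x) i.
Proof.
move=> hii hi'.
have tr : transitive (fun a b : R => b <= a).
  by move=> a b c hba hcb; exact: le_trans hcb hba.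
have rf : reflexive (fun a b : R => b <= a) by move=> a.
have so : sorted (fun a b : R => b <= a) (sorted_abs x).
  by rewrite /sorted_abs; apply: sort_sorted => a b; exact: le_total.
apply: (sorted_leq_nth tr rf 0 so) => //.
- by rewrite inE size_s; apply: leq_ltn_trans hi'.
- by rewrite inE size_s.
Qed.

Lemma s_ge0 x i : 0 <= nth 0 (sorted_abs x) i.
Proof.
case: (ltnP i (size (sorted_abs x))) => hi; last by rewrite nth_default.
have := mem_nth 0 hi; rewrite (perm_mem (perm_s x)) => /mapP [j _ ->].
exact: normr_ge0.
Qed.

Lemma pp_ge0 v : 0 <= pp v.
Proof. by rewrite /pp le_max lexx orbT. Qed.

Lemma pp_ge v : v <= pp v.
Proof. by rewrite /pp le_max lexx. Qed.

Lemma pp_id v : 0 <= v -> pp v = v.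
Proof. by move=> hv; rewrite /pp max_l. Qed.

Lemma pp_0 v : v <= 0 -> pp v = 0.
Proof. by move=> hv; rewrite /pp max_r. Qed.

Lemma S_min k x c : (k <= p)%N ->
  S k x <= k%:R * c + \sum_(j < p) pp (`|x 0 j| - c).
Proof.
move=> hk; rewrite -(sum_s x (fun v => pp (v - c))) /S.
apply: (@le_trans _ _ (\sum_(i < k) (c + pp (nth 0 (sorted_abs x) i - c)))).
  by apply: ler_sum => i _; rewrite -lerBlDl pp_ge.
rewrite big_split /= sumr_const card_ord mulr_natl lerD2l.
rewrite (big_ord_widen p (fun i => pp (nth 0 (sorted_abs x) i - c))) //.
rewrite [X in _ <= X](bigID (fun i : 'I_p => (i < k)%N)) /= lerDl.
by apply: sumr_ge0 => i _; exact: pp_ge0.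
Qed.

Lemma S_eq k x : (1 <= k <= p)%N ->
  S k x = k%:R * nth 0 (sorted_abs x) k.-1 +
          \sum_(j < p) pp (`|x 0 j| - nth 0 (sorted_abs x) k.-1).
Proof.
case/andP => hk1 hkp; set c := nth 0 (sorted_abs x) k.-1.
rewrite -(sum_s x (fun v => pp (v - c))) (bigID (fun i : 'I_p => (i < k)%N)) /=.
rewrite [X in _ = _ + (_ + X)]big1; last first.
  move=> i; rewrite -leqNgt => hi; apply: pp_0; rewrite subr_le0.
  by apply: s_sorted => //; apply: leq_trans hi; rewrite leq_pred.
rewrite addr0 -(big_ord_widen p (fun i => pp (nth 0 (sorted_abs x) i - c))) //.
rewrite /S.
have -> : \sum_(i < k) pp (nth 0 (sorted_abs x) i - c) =
          \sum_(i < k) (nth 0 (sorted_abs x) i - c).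
  apply: eq_bigr => i _; apply: pp_id; rewrite subr_ge0; apply: s_sorted.
    by rewrite -ltnS prednK.
  by apply: leq_trans hkp; rewrite prednK.
by rewrite sumrB sumr_const card_ord mulr_natl addrC subrK.
Qed.


Lemma S0 x : S 0 x = 0.
Proof. by rewrite /S big_ord0. Qed.

Lemma pp_mul (phi u : R) : 0 <= phi <= 1 -> phi * u <= pp u.
Proof.
case/andP => h0 h1; rewrite /pp; case: (lerP 0 u) => hu.
  by rewrite -[X in _ <= X]mul1r ler_wpM2r.
by rewrite mulr_ge0_le0 // ltW.
Qed.

Lemma pp_le u A : u <= A -> 0 <= A -> pp u <= A.
Proof. by move=> h1 h2; rewrite /pp ge_max h1 h2. Qed.

Lemma S_weight k x (phi : 'I_p -> R) : (1 <= k <= p)%N ->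
  (forall j, 0 <= phi j <= 1) -> \sum_j phi j = k%:R ->
  \sum_j phi j * `|x 0 j| <= S k x.
Proof.
move=> hk hphi hsum; rewrite S_eq //; set c := nth 0 (sorted_abs x) k.-1.
apply: (@le_trans _ _ (\sum_j (phi j * c + pp (`|x 0 j| - c)))).
  apply: ler_sum => j _; rewrite -lerBlDl -mulrBr; exact: pp_mul.
by rewrite big_split /= -mulr_suml hsum.
Qed.

Lemma S_subadd k x y : (k <= p)%N -> S k (x + y) <= S k x + S k y.
Proof.
case: k => [|k] hk; first by rewrite !S0 addr0.
have hk' : (1 <= k.+1 <= p)%N by rewrite hk.
rewrite (S_eq x hk') (S_eq y hk').
set cx := nth 0 (sorted_abs x) k.+1.-1; set cy := nth 0 (sorted_abs y) k.+1.-1.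
apply: le_trans (S_min _ (cx + cy) hk) _.
rewrite addrACA -mulrDr lerD2l -big_split /=; apply: ler_sum => j _.
apply: pp_le; last by rewrite addr_ge0 // pp_ge0.
rewrite mxE opprD addrA.
apply: (@le_trans _ _ ((`|x 0 j| - cx) + (`|y 0 j| - cy))); last by rewrite lerD // pp_ge.
have := ler_normD (x 0 j) (y 0 j); lra.
Qed.

Lemma S_scale k t x : 0 <= t -> (k <= p)%N -> S k (t *: x) <= t * S k x.
Proof.
move=> ht; case: k => [|k] hk; first by rewrite !S0 mulr0.
have hk' : (1 <= k.+1 <= p)%N by rewrite hk.
rewrite (S_eq x hk'); set c := nth 0 (sorted_abs x) k.+1.-1.
apply: le_trans (S_min _ (t * c) hk) _.
rewrite mulrDr mulr_sumr mulrCA lerD2l; apply: ler_sum => j _.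
apply: pp_le; last by rewrite mulr_ge0 // pp_ge0.
rewrite mxE normrM (ger0_norm ht) -mulrBr; apply: ler_wpM2l => //; exact: pp_ge.
Qed.

Lemma S_mono k k' x : (k <= k')%N -> S k x <= S k' x.
Proof.
move=> hk; rewrite /S (big_ord_widen k' (fun i => nth 0 (sorted_abs x) i)) //.
rewrite [X in _ <= X](bigID (fun i : 'I_k' => (i < k)%N)) /= lerDl.
by apply: sumr_ge0 => i _; exact: s_ge0.
Qed.

Lemma S_sumabs k x : (k <= p)%N -> S k x <= \sum_j `|x 0 j|.
Proof.
move=> hk; apply: le_trans (S_min x 0 hk) _.
rewrite mulr0 add0r; apply: ler_sum => j _; rewrite subr0 pp_id //.
Qed.

Lemma cnt_s x (P : pred R) :
  \sum_(j < p) (P `|x 0 j|)%:R = \sum_(i < p) (P (nth 0 (sorted_abs x) i))%:R :> R.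
Proof. by rewrite (sum_s x (fun v => (P v)%:R)). Qed.

Lemma cnt_le k x (P : pred R) : (k <= p)%N ->
  (forall i, (k <= i < p)%N -> ~~ P (nth 0 (sorted_abs x) i)) ->
  \sum_(j < p) (P `|x 0 j|)%:R <= k%:R :> R.
Proof.
move=> hk hP; rewrite cnt_s (bigID (fun i : 'I_p => (i < k)%N)) /=.
rewrite [X in _ + X <= _]big1; last first.
  by move=> i; rewrite -leqNgt => hi; rewrite (negbTE (hP i _)) // hi ltn_ord.
rewrite addr0 -(big_ord_widen p (fun i => (P (nth 0 (sorted_abs x) i))%:R)) //.
apply: le_trans (_ : \sum_(i < k) (1 : R) <= _).
  by apply: ler_sum => i _; case: (P _).
by rewrite sumr_const card_ord.
Qed.

Lemma cnt_ge k x (P : pred R) : (k <= p)%N ->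
  (forall i, (i < k)%N -> P (nth 0 (sorted_abs x) i)) ->
  k%:R <= \sum_(j < p) (P `|x 0 j|)%:R :> R.
Proof.
move=> hk hP; rewrite cnt_s (bigID (fun i : 'I_p => (i < k)%N)) /=.
rewrite -(big_ord_widen p (fun i => (P (nth 0 (sorted_abs x) i))%:R)) //.
apply: le_trans (_ : \sum_(i < k) (1 : R) <= _).
  by rewrite sumr_const card_ord.
rewrite -[X in X <= _]addr0; apply: lerD.
  by apply: ler_sum => i _; rewrite hP.
by apply: sumr_ge0 => i _; case: (P _).
Qed.

Definition L (lam : 'rV[R]_p) i : R := nth 0 [seq lam 0 j | j <- enum 'I_p] i.
Definition Lam lam k : R := \sum_(i < k) L lam i.

Lemma J_eq lam x : slope_pen lam x = \sum_(i < p) L lam i * nth 0 (sorted_abs x) i.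
Proof. by rewrite /slope_pen big_add1 /= big_mkord. Qed.

Lemma Abel (F o : nat -> R) n :
  \sum_(i < n) F i * o i =
  \sum_(i < n) (F i - F i.+1) * (\sum_(i' < i.+1) o i') + F n * \sum_(i < n) o i.
Proof.
elim: n => [|n IH]; first by rewrite !big_ord0 mulr0 addr0.
rewrite big_ord_recr /= IH big_ord_recr /= [in RHS]big_ord_recr /=.
by ring.
Qed.

Lemma L_out lam : L lam p = 0.
Proof. by rewrite /L nth_default // size_map size_enum_ord. Qed.

Lemma L_ord lam (i : 'I_p) : L lam i = lam 0 i.
Proof. by rewrite /L (nth_map i 0) ?size_enum_ord ?ltn_ord // nth_ord_enum. Qed.

Lemma J_abel lam x :
  slope_pen lam x = \sum_(i < p) (L lam i - L lam i.+1) * S i.+1 x.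
Proof. by rewrite J_eq Abel L_out mul0r addr0. Qed.

Lemma dL_ge0 (lam : 'rV[R]_p) : (forall i j : 'I_p, (i <= j)%N -> lam 0 j <= lam 0 i) ->
  (forall i : 'I_p, 0 <= lam 0 i) ->
  forall i, (i < p)%N -> 0 <= L lam i - L lam i.+1.
Proof.
move=> hmono hnn i hi; rewrite subr_ge0.
case: (ltnP i.+1 p) => hi1.
  by rewrite (L_ord lam (Ordinal hi)) (L_ord lam (Ordinal hi1)); apply: hmono => /=.
have -> : i.+1 = p by apply/eqP; rewrite eqn_leq hi1 hi.
by rewrite L_out (L_ord lam (Ordinal hi)).
Qed.

Lemma sum_ind n k : \sum_(i < n) ((i < k)%N)%:R = (minn n k)%:R :> R.
Proof.
elim: n => [|n IH]; first by rewrite big_ord0 min0n.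
rewrite big_ord_recr /= IH; case: (ltnP n k) => h.
  by rewrite -natrD addn1 (minn_idPl h).
by rewrite addr0 (minn_idPr (leq_trans h (leqnSn n))).
Qed.

Lemma Lam_abel lam k : (k <= p)%N ->
  \sum_(i < p) (L lam i - L lam i.+1) * (minn i.+1 k)%:R = Lam lam k.
Proof.
move=> hk.
have -> : \sum_(i < p) (L lam i - L lam i.+1) * (minn i.+1 k)%:R =
  \sum_(i < p) (L lam i - L lam i.+1) * \sum_(i' < i.+1) ((i' < k)%N)%:R.
  by apply: eq_bigr => i _; rewrite sum_ind.
have := Abel (L lam) (fun i => ((i < k)%N)%:R) p.
rewrite L_out mul0r addr0 => <-.
rewrite /Lam (big_ord_widen p (L lam)) // [RHS]big_mkcond /=.
by apply: eq_bigr => i _; case: (i < k)%N; rewrite ?mulr1 ?mulr0.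
Qed.

Lemma J_subadd (lam : 'rV[R]_p) x w t : (forall i j : 'I_p, (i <= j)%N -> lam 0 j <= lam 0 i) ->
  (forall i : 'I_p, 0 <= lam 0 i) -> 0 <= t ->
  slope_pen lam (x + t *: w) <= slope_pen lam x + t * slope_pen lam w.
Proof.
move=> hm hn ht; rewrite !J_abel mulr_sumr -big_split /=; apply: ler_sum => i _.
rewrite mulrCA -mulrDr; apply: ler_wpM2l; first exact: dL_ge0.
apply: le_trans (S_subadd _ _ (ltn_ord i)) _.
by rewrite lerD2l; apply: S_scale => //; exact: ltn_ord.
Qed.

Lemma J_bound (lam : 'rV[R]_p) w k : (forall i j : 'I_p, (i <= j)%N -> lam 0 j <= lam 0 i) ->
  (forall i : 'I_p, 0 <= lam 0 i) -> (k <= p)%N ->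
  (forall n, (1 <= n <= p)%N -> S n w <= (minn n k)%:R) ->
  slope_pen lam w <= Lam lam k.
Proof.
move=> hm hn hk hS; rewrite J_abel -(Lam_abel lam hk); apply: ler_sum => i _.
apply: ler_wpM2l; first exact: dL_ge0.
by apply: hS; rewrite ltn_ord.
Qed.
End Sorting.



Section Opt.
Variable R : realType.
Variable p : nat.

Lemma opt_dir (l : 'rV[R]_p -> R) (b w : 'rV[R]_p) (K t0 : R) :
  differentiable l b -> 0 < t0 ->
  (forall t, 0 < t -> t <= t0 -> - (t * K) <= l (b + t *: w) - l b) ->
  - K <= 'd l b w.
Proof.
move=> hd ht0 hq.
rewrite -deriveE //.
have cv := @diff_derivable _ _ _ l b w hd.
rewrite /derive.
have cv' := cvg_dnbhs_at_right cv.
rewrite (cvg_at_rightE _ _ cv).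
apply: limr_ge; first exact: (cvgP _ cv').
near=> h.
have h0 : 0 < h by near: h; exact: nbhs_right_gt.
have h1 : h <= t0 by near: h; apply: nbhs_right_le.
have H := hq h h0 h1.
rewrite -(ler_pM2l h0) /GRing.scale /= mulrA mulfV ?gt_eqF // mul1r.
have -> : scalemx h w + b = b + h *: w by rewrite addrC.
by rewrite mulrN.
Unshelve. all: by end_near.
Qed.

End Opt.
Lemma dgrad (R : realType) p (l : 'rV[R]_p -> R) (b w : 'rV[R]_p) :
  'd l b w = \sum_j grad l b 0 j * w 0 j.
Proof.
rewrite {1}(row_sum_delta w) linear_sum; apply: eq_bigr => j _.
by rewrite linearZ /= /grad mxE mulrC.
Qed.



Section Main.
Variable R : realType.
Variable p : nat.

Lemma sum_shift (f : nat -> R) j r : (1 <= j <= r.+1)%N ->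
  \sum_(j <= i < r.+1) f i = \sum_(i < r) f i.+1 - \sum_(i < j.-1) f i.+1.
Proof.
case: j => [//|j] /= hj; rewrite big_add1 /=.
rewrite -!(big_mkord xpredT (fun i => f i.+1)).
by rewrite [X in _ = X - _](@big_cat_nat _ _ _ j) //= addrAC subrr add0r.
Qed.

Lemma card_sum (P : pred 'I_p) : \sum_j (P j)%:R = #|P|%:R :> R.
Proof.
rewrite -sum1_card natr_sum [RHS]big_mkcond /=.
by apply: eq_bigr => i _; rewrite unfold_in /=; case: (P i).
Qed.

Lemma H_disj (lam w : 'rV[R]_p) r s : (1 <= r)%N -> (r < s)%N -> (s <= p)%N ->
  H lam r w -> H lam s w -> False.
Proof.
move=> h1 hrs hsp [_ h2] [h3 _].
have := h3 r.+1; rewrite hrs => /(_ isT) hlt.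
have := h2 s; rewrite hrs hsp => /(_ isT) hge.
by move: (lt_le_trans hlt hge); rewrite ltxx.
Qed.

Lemma H_conv (lam w : 'rV[R]_p) r j : (1 <= j <= r.+1)%N ->
  (\sum_(j <= i < r.+1) lamn lam i = Lam lam r - Lam lam j.-1) /\
  (\sum_(j <= i < r.+1) oabs w i = S r w - S j.-1 w).
Proof. by move=> hj; rewrite !sum_shift. Qed.

End Main.



Section Main2.
Variable R : realType.
Variable p : nat.
Variable l : 'rV[R]_p -> R.
Variables lam b : 'rV[R]_p.
Hypothesis hdiff : forall x, differentiable l x.
Hypothesis hm : forall i j : 'I_p, (i <= j)%N -> lam 0 j <= lam 0 i.
Hypothesis hn : forall i : 'I_p, 0 <= lam 0 i.
Hypothesis hopt : forall x, l b + slope_pen lam b <= l x + slope_pen lam x.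

Let U : 'rV[R]_p := - grad l b.

Lemma opt_J w K t0 : 0 < t0 ->
  (forall t, 0 < t -> t <= t0 ->
     slope_pen lam (b + t *: w) <= slope_pen lam b + t * K) ->
  \sum_j U 0 j * w 0 j <= K.
Proof.
move=> ht0 hJ.
have := opt_dir (w := w) (K := K) (hdiff b) ht0.
rewrite dgrad => H1.
have H2 : - K <= \sum_j grad l b 0 j * w 0 j.
  apply: H1 => t h0 h1; have := hopt (b + t *: w); have := hJ t h0 h1; lra.
have -> : \sum_j U 0 j * w 0 j = - \sum_j grad l b 0 j * w 0 j.
  by rewrite -sumrN; apply: eq_bigr => j _; rewrite /U mxE mulNr.
lra.
Qed.

Lemma dualU k : (k <= p)%N -> S k U <= Lam lam k.
Proof.
case: k => [|k] hk; first by rewrite S0 /Lam big_ord0.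
set c := nth 0 (sorted_abs U) k.
set g := \sum_j ((c < `|U 0 j|)%R)%:R : R.
set e := \sum_j ((`|U 0 j| == c)%R)%:R : R.
have hg : g <= k%:R.
  apply: (cnt_le (x := U) (P := fun v => c < v) (ltnW hk)) => i /andP [hi hip]; rewrite -leNgt; exact: (s_sorted U hi hip).
have hge : k.+1%:R <= \sum_j ((c <= `|U 0 j|)%R)%:R :> R.
  apply: (cnt_ge (x := U) (P := fun v => c <= v) hk) => i hi /=; exact: (s_sorted U (hi : (i <= k)%N) hk).
have hsplit : \sum_j ((c <= `|U 0 j|)%R)%:R = g + e :> R.
  rewrite /g /e -big_split; apply: eq_bigr => j _ /=.
  by case: (ltgtP c `|U 0 j|) => _; rewrite /= ?addr0 ?add0r.
have he : 0 < e.
  have : (k.+1%:R : R) = k%:R + 1 by rewrite -natr1.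
  lra.
set th := (k.+1%:R - g) / e.
have hth0 : 0 <= th.
  apply: divr_ge0; last exact: ltW.
  rewrite -natr1; lra.
have hth1 : th <= 1.
  rewrite ler_pdivrMr // mul1r. lra.
set phi := fun j => if c < `|U 0 j| then 1 else if `|U 0 j| == c then th else 0.
have phi01 : forall j, 0 <= phi j <= 1.
  move=> j; rewrite /phi; case: ifP => _; first by rewrite ler01 lexx.
  by case: ifP => _; rewrite ?hth0 ?hth1 ?lexx ?ler01.
have hsphi : \sum_j phi j = k.+1%:R.
  have -> : \sum_j phi j = g + e * th.
    rewrite /g /e mulr_suml -big_split; apply: eq_bigr => j _; rewrite /phi.
    by case: (ltgtP c `|U 0 j|) => _ /=; rewrite ?mul0r ?mul1r ?addr0 ?add0r.
  rewrite /th mulrCA divff ?gt_eqF // mulr1; lra.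
set w : 'rV[R]_p := \row_j (Num.sg (U 0 j) * phi j).
have wE : forall j, w 0 j = Num.sg (U 0 j) * phi j by move=> j; exact: mxE.
have hwabs : forall j, `|w 0 j| <= phi j.
  move=> j; rewrite wE normrM normr_sg (ger0_norm (proj1 (andP (phi01 j)))).
  case: (U 0 j != 0) => /=; rewrite ?mul1r ?mul0r //.
  by case/andP: (phi01 j).
have hUw : \sum_j U 0 j * w 0 j = S k.+1 U.
  rewrite (S_eq (k := k.+1)) //= -/c.
  have -> : \sum_j U 0 j * w 0 j = \sum_j (phi j * c + pp (`|U 0 j| - c)).
    apply: eq_bigr => j _; rewrite wE mulrA (mulrC (U 0 j)) -normrEsg.
    rewrite /phi; case: (ltgtP c `|U 0 j|) => h /=.
    - rewrite pp_id ?subr_ge0 ?ltW //; lra.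
    - rewrite pp_0 ?subr_le0 ?ltW //; lra.
    - by rewrite -h subrr pp_0 // addr0 mulrC.
  by rewrite big_split /= -mulr_suml hsphi.
have hJw : slope_pen lam w <= Lam lam k.+1.
  apply: J_bound => // n /andP [hn1 hnp].
  case: (leqP n k.+1) => h.
  - apply: le_trans (S_min w 1 hnp) _.
    rewrite mulr1 -[X in _ <= X]addr0 lerD2l big1 // => j _.
    apply: pp_0; rewrite subr_le0; apply: le_trans (hwabs j) _.
    by case/andP: (phi01 j).
  - apply: le_trans (S_sumabs w hnp) _; rewrite -hsphi; exact: ler_sum.
rewrite -hUw; apply: le_trans hJw.
apply: (opt_J (t0 := 1)) => // t ht _.
exact: J_subadd (ltW ht).
Qed.


Let A := [set i : 'I_p | b 0 i != 0].
Let phiA (j : 'I_p) : R := (j \in A)%:R.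
Let m0 : R := (\sum_(j in A) `|b 0 j|^-1)^-1.

Lemma inA j : (j \in A) = (b 0 j != 0).
Proof. by rewrite inE. Qed.

Lemma sum_phiA : \sum_j phiA j = #|A|%:R.
Proof.
rewrite -sum1_card natr_sum [RHS]big_mkcond /=.
by apply: eq_bigr => j _; rewrite /phiA; case: (j \in A).
Qed.

Lemma phiA01 j : 0 <= phiA j <= 1.
Proof. by rewrite /phiA; case: (j \in A); rewrite /= ?lexx ?ler01. Qed.

Lemma phiA_abs j : phiA j * `|b 0 j| = `|b 0 j|.
Proof.
rewrite /phiA inA; case: (boolP (b 0 j != 0)) => h /=; first by rewrite mul1r.
by move/negPn/eqP: h => ->; rewrite normr0 mulr0.
Qed.

Lemma sum_abs_phiA : \sum_j phiA j * `|b 0 j| = \sum_j `|b 0 j|.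
Proof. by apply: eq_bigr => j _; rewrite phiA_abs. Qed.

Lemma m0_le j : j \in A -> m0 <= `|b 0 j|.
Proof.
move=> hj; have hb : 0 < `|b 0 j| by rewrite normr_gt0 -inA.
have hs : `|b 0 j|^-1 <= \sum_(i in A) `|b 0 i|^-1.
  rewrite (bigD1 j) //= lerDl; apply: sumr_ge0 => i _; rewrite invr_ge0 //.
have hs0 : 0 < \sum_(i in A) `|b 0 i|^-1 by apply: lt_le_trans hs; rewrite invr_gt0.
rewrite /m0 -[X in _ <= X]invrK lef_pV2 // ?posrE ?invr_gt0 //.
Qed.

Lemma m0_gt0 : (0 < #|A|)%N -> 0 < m0.
Proof.
move=> /card_gt0P [j hj]; have hb : 0 < `|b 0 j| by rewrite normr_gt0 -inA.
have hs : `|b 0 j|^-1 <= \sum_(i in A) `|b 0 i|^-1.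
  rewrite (bigD1 j) //= lerDl; apply: sumr_ge0 => i _; rewrite invr_ge0 //.
by rewrite /m0 invr_gt0; apply: lt_le_trans hs; rewrite invr_gt0.
Qed.

Lemma A_le_p : (#|A| <= p)%N.
Proof. by rewrite -[X in (_ <= X)%N]card_ord max_card. Qed.

Lemma P2 : (0 < #|A|)%N -> Lam lam #|A| <= \sum_j U 0 j * Num.sg (b 0 j).
Proof.
move=> hA; set Rn := #|A|; have hRp : (Rn <= p)%N := A_le_p.
have hm0 := m0_gt0 hA.
set w : 'rV[R]_p := \row_j (- Num.sg (b 0 j)).
have wE : forall j, w 0 j = - Num.sg (b 0 j) by move=> j; exact: mxE.
have key : \sum_j U 0 j * w 0 j <= - Lam lam Rn.
  apply: (opt_J (t0 := m0)) => // t ht htm.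
  have bw : forall j, (b + t *: w) 0 j = b 0 j - t * Num.sg (b 0 j).
    by move=> j; rewrite !mxE mulrN.
  have habs : forall j, `|(b + t *: w) 0 j| = phiA j * (`|b 0 j| - t).
    move=> j; rewrite bw /phiA inA; case: (boolP (b 0 j != 0)) => h /=.
      rewrite mul1r {1}(numEsg (b 0 j)) (mulrC t) -mulrBr normrM normr_sg h mul1r ger0_norm //.
      rewrite subr_ge0; apply: le_trans htm _; apply: m0_le; by rewrite inA.
    by move/negPn/eqP: h => ->; rewrite sgr0 mulr0 subr0 normr0 mul0r.
  have hS : forall n, (1 <= n <= p)%N ->
      S n (b + t *: w) <= S n b - t * (minn n Rn)%:R.
    move=> n /andP [hn1 hnp]; case: (leqP Rn n) => hnR.
    -
      apply: le_trans (S_sumabs (b + t *: w) hnp) _.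
      have -> : \sum_j `|(b + t *: w) 0 j| = \sum_j `|b 0 j| - t * Rn%:R.
        under eq_bigr => j _ do rewrite habs mulrBr.
        by rewrite sumrB sum_abs_phiA -mulr_suml sum_phiA mulrC.
      rewrite lerD2r -sum_abs_phiA; apply: le_trans (S_mono b hnR).
      by apply: S_weight => //; [rewrite hA | exact: phiA01 | exact: sum_phiA].
    -
      set c := nth 0 (sorted_abs b) n.-1.
      have hc : m0 <= c.
        rewrite leNgt; apply/negP => hlt.
        have h1 : \sum_j ((m0 <= `|b 0 j|)%R)%:R <= (n.-1)%:R :> R.
          apply: (cnt_le (x := b) (P := fun v => m0 <= v)).
            by apply: leq_trans (leq_pred n) hnp.
          move=> i /andP [hi hip] /=; rewrite -ltNge.
          exact: le_lt_trans (s_sorted b hi hip) hlt.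
        have h2 : Rn%:R <= \sum_j ((m0 <= `|b 0 j|)%R)%:R :> R.
          rewrite -sum_phiA; apply: ler_sum => j _; rewrite /phiA.
          case: (boolP (j \in A)) => hj /=; first by rewrite m0_le.
          by case: (m0 <= _)%R.
        have := le_trans h2 h1; rewrite ler_nat => h3.
        by have := leq_ltn_trans (leq_trans h3 (leq_pred n)) hnR; rewrite ltnn.
      have ht0 : 0 <= c - t by rewrite subr_ge0; exact: le_trans htm hc.
      apply: le_trans (S_min (b + t *: w) (c - t) hnp) _.
      rewrite (S_eq (k := n) b) ?hn1 // -/c.
      have -> : \sum_j pp (`|(b + t *: w) 0 j| - (c - t)) = \sum_j pp (`|b 0 j| - c).
        apply: eq_bigr => j _; rewrite habs /phiA inA.
        case: (boolP (b 0 j != 0)) => h /=.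
          by congr pp; rewrite mul1r; lra.
        move/negPn/eqP: h => ->; rewrite mul0r normr0 !pp_0 //; lra.
      lra.
  have E : slope_pen lam b + t * - Lam lam Rn =
      \sum_(i < p) (L lam i - L lam i.+1) * (S i.+1 b - t * (minn i.+1 Rn)%:R).
    rewrite J_abel -(Lam_abel lam hRp) mulrN mulr_sumr -sumrN -big_split /=.
    by apply: eq_bigr => i _; ring.
  rewrite E J_abel; apply: ler_sum => i _; apply: ler_wpM2l.
    exact: dL_ge0.
  by apply: hS; rewrite ltn_ord.
have -> : \sum_j U 0 j * Num.sg (b 0 j) = - \sum_j U 0 j * w 0 j.
  by rewrite -sumrN; apply: eq_bigr => j _; rewrite wE mulrN opprK.
lra.
Qed.

Lemma Hmain (a : R) : 0 < a -> (0 < #|A|)%N -> H lam #|A| (U + a *: b).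
Proof.
move=> ha hA; set Rn := #|A|; have hRp : (Rn <= p)%N := A_le_p.
set T := U + a *: b; set Bs := \sum_j `|b 0 j|.
have hm0 := m0_gt0 hA.
have hE : Lam lam Rn + a * Bs <= S Rn T.
  apply: le_trans (S_weight T (k := Rn) (phi := phiA) _ phiA01 sum_phiA).
    2: by rewrite hA.
  apply: (@le_trans _ _ (\sum_j T 0 j * Num.sg (b 0 j))).
    have -> : \sum_j T 0 j * Num.sg (b 0 j) =
              \sum_j U 0 j * Num.sg (b 0 j) + a * Bs.
      rewrite /Bs mulr_sumr -big_split /=; apply: eq_bigr => j _.
      by rewrite /T !mxE mulrDl -mulrA (mulrC (b 0 j)) -normrEsg.
    by rewrite lerD2r; exact: P2.
  apply: ler_sum => j _; rewrite /phiA inA.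
  case: (boolP (b 0 j != 0)) => h /=.
    by rewrite mul1r; apply: le_trans (ler_norm _) _; rewrite normrM normr_sg h mulr1.
  by move/negPn/eqP: h => ->; rewrite sgr0 mulr0 mul0r.
have hST : forall k, (k <= p)%N -> S k T <= Lam lam k + a * S k b.
  move=> k hk; apply: le_trans (S_subadd _ _ hk) _.
  apply: lerD; first exact: dualU.
  exact: S_scale (ltW ha) hk.
split.
- move=> j /andP [hj1 hjR].
  have [e1 e2] := H_conv lam T (r := Rn) (j := j) (ltac:(by rewrite hj1 /= ltnW)).
  rewrite e1 e2; set m := j.-1.
  have hmR : (m < Rn)%N by rewrite /m -ltnS prednK.
  have hmp : (m <= p)%N by apply: leq_trans (ltnW hmR) hRp.
  have hSmb : S m b < Bs.
    apply: le_lt_trans (S_min b m0 hmp) _.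
    have -> : \sum_j pp (`|b 0 j| - m0) = Bs - Rn%:R * m0.
      have -> : \sum_j pp (`|b 0 j| - m0) = \sum_j phiA j * (`|b 0 j| - m0).
        apply: eq_bigr => j' _; rewrite /phiA; case: (boolP (j' \in A)) => h /=.
          by rewrite mul1r pp_id // subr_ge0 m0_le.
        move: h; rewrite inA => /negPn/eqP ->; rewrite normr0 mul0r pp_0 // subr_le0 ltW //.
      under eq_bigr => j' _ do rewrite mulrBr.
      by rewrite sumrB sum_abs_phiA -mulr_suml sum_phiA.
    have : m%:R * m0 < Rn%:R * m0 by rewrite ltr_pM2r // ltr_nat.
    lra.
  have h1 : a * S m b < a * Bs by rewrite ltr_pM2l.
  have := hST m hmp; have := hE; move: h1; lra.
- move=> j /andP [hj1 hjp].
  have [e1 e2] := H_conv lam T (r := j) (j := Rn.+1) (ltac:(by rewrite /= ltnS ltnW)).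
  rewrite e1 e2 /=.
  have := hST j hjp; have : a * S j b <= a * Bs.
    by rewrite ler_pM2l //; exact: S_sumabs.
  have := hE; lra.
Qed.

Lemma HR0 (a : R) r : #|A| = 0%N -> (1 <= r <= p)%N -> ~ H lam r (U + a *: b).
Proof.
move=> hA hr [h1 _].
have hb : b = 0.
  apply/rowP => j; rewrite mxE; apply/eqP; rewrite -[_ == _]negbK -inA.
  by rewrite (cards0_eq hA) inE.
have [e1 e2] := H_conv lam (U + a *: b) (r := r) (j := 1) (ltac:(by [])).
have := h1 1%N; rewrite e1 e2 hb scaler0 addr0 /= S0 /Lam big_ord0 !subr0.
case/andP: hr => hr1 hrp; rewrite hr1 => /(_ isT) hlt.
have := dualU hrp; rewrite /Lam; lra.
Qed.

Lemma main_iff (a : R) r : 0 < a -> (1 <= r <= p)%N ->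
  #|A| = r <-> H lam r (U + a *: b).
Proof.
move=> ha hr; split.
  move=> hR; have hA : (0 < #|A|)%N by rewrite hR; case/andP: hr.
  by rewrite -hR; exact: Hmain.
move=> hH; case: (posnP #|A|) => hA0; first by case: (HR0 hA0 hr hH).
have hH' := Hmain ha hA0; have hAp := A_le_p.
case/andP: hr => hr1 hrp.
case: (ltngtP #|A| r) => h //.
  by case: (H_disj hA0 h hrp hH' hH).
by case: (H_disj hr1 h hAp hH hH').
Qed.
End Main2.

End Helpers.

Theorem theorem2 (R : realType) (p : nat) (l : 'rV[R]_p -> R)
  (lam : 'rV[R]_p) (bhat : 'rV[R]_p) :
  convex_fun l ->
  (forall b : 'rV[R]_p, differentiable l b) ->
  (forall i j : 'I_p, (i <= j)%N -> lam 0 j <= lam 0 i) ->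
  (forall i : 'I_p, 0 <= lam 0 i) ->
  (forall b : 'rV[R]_p, l bhat + slope_pen lam bhat <= l b + slope_pen lam b) ->
  forall a : R, 0 < a ->
  forall r : nat, (1 <= r <= p)%N ->
    (#|[set i : 'I_p | bhat 0 i != 0]| = r <->
     H lam r (- grad l bhat + a *: bhat)).
Proof.
move=> _ hdiff hm hn hopt a ha r hr.
exact: (Helpers.main_iff hdiff hm hn hopt ha hr).
Qed.
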